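(* Let $\delta\in(0,1)$. For any $\lambda\in G_\delta$ and any contraction $T$ on a Hilbert space $\mathcal{M}$, the operator $1-\tfrac12\lambda T^*$ is invertible, so that $\lambda_T=(\delta T^*-\tfrac12\lambda)(1-\tfrac12\lambda T^* )^{-1}$ is a well-defined bounded operator on $\mathcal{M}$, and $\|\lambda_T\|<1$. Moreover, for a contraction $T$ on $\mathcal{M}$, the map $G_\delta\to\mathcal{B}(\mathcal{M})$, $\lambda\mapsto\lambda_T$, is holomorphic on $G_\delta$.
   Context: $G_\delta=\{x+iy: x,y\in\mathbb{R},\ \frac{x^2}{(1+\delta)^2}+\frac{y^2}{(1-\delta)^2}<1\}$. *)

(* Defs.v *)
From HB Require Import structures.
From mathcomp Require Import all_boot all_order all_algebra.
From mathcomp Require Import reals.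
From mathcomp.real_closed Require Import complex.
Set Implicit Arguments. Unset Strict Implicit. Unset Printing Implicit Defensive.
Import Order.TTheory GRing.Theory Num.Theory.
Local Open Scope ring_scope.

Section HilbertDefs.
Variable R : realType.
Local Notation C := (complex R).

Definition cabs (z : C) : R := Num.sqrt (complex.Re z ^+ 2 + complex.Im z ^+ 2).

Definition cR (r : R) : C := Complex r 0.

Variable V : lmodType C.
Variable ip : V -> V -> C.   (* inner product, linear in the first argument *)

Definition hnorm (x : V) : R := Num.sqrt (complex.Re (ip x x)).

Definition is_inner_product : Prop :=
  [/\ (forall (a : C) (x y z : V), ip (a *: x + y) z = a * ip x z + ip y z),
      (forall x y : V, ip y x = conjc (ip x y)),
      (forall x : V, complex.Im (ip x x) = 0 /\ 0 <= complex.Re (ip x x))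
    & (forall x : V, ip x x = 0 -> x = 0)].

Definition complete : Prop :=
  forall u : nat -> V,
    (forall e : R, 0 < e -> exists N : nat, forall m n : nat,
        (N <= m)%N -> (N <= n)%N -> hnorm (u m - u n) < e) ->
    exists l : V, forall e : R, 0 < e -> exists N : nat, forall n : nat,
        (N <= n)%N -> hnorm (u n - l) < e.

Definition is_hilbert : Prop := is_inner_product /\ complete.

Definition is_linear_op (T : V -> V) : Prop :=
  forall (a : C) (x y : V), T (a *: x + y) = a *: T x + T y.

Definition op_norm_le (T : V -> V) (c : R) : Prop :=
  forall x : V, hnorm (T x) <= c * hnorm x.

Definition bounded_op (T : V -> V) : Prop :=
  is_linear_op T /\ exists c : R, op_norm_le T c.

(* ||T|| < 1  (the operator norm is the least such bound, which is attained) *)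
Definition op_norm_lt1 (T : V -> V) : Prop :=
  exists c : R, c < 1 /\ op_norm_le T c.

Definition contraction (T : V -> V) : Prop := bounded_op T /\ op_norm_le T 1.

Definition is_adjoint (T Ts : V -> V) : Prop :=
  forall x y : V, ip (T x) y = ip x (Ts y).

Definition op_inverse (A S : V -> V) : Prop :=
  [/\ bounded_op S, (forall x, S (A x) = x) & (forall x, A (S x) = x)].

Definition denom_op (Ts : V -> V) (lam : C) : V -> V :=
  fun x => x - (lam / 2%:R) *: Ts x.

Definition numer_op (delta : R) (Ts : V -> V) (lam : C) : V -> V :=
  fun x => cR delta *: Ts x - (lam / 2%:R) *: x.

Definition holomorphic_on (G : C -> Prop) (F : C -> V -> V) : Prop :=
  forall lam : C, G lam ->
    exists D : V -> V, bounded_op D /\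
      forall e : R, 0 < e -> exists d : R, 0 < d /\
        forall mu : C, G mu -> 0 < cabs (mu - lam) < d ->
          op_norm_le (fun x => F mu x - F lam x - (mu - lam) *: D x)
                     (e * cabs (mu - lam)).

End HilbertDefs.

Definition G_delta (R : realType) (delta : R) (lam : complex R) : Prop :=
  (complex.Re lam) ^+ 2 / (1 + delta) ^+ 2 + (complex.Im lam) ^+ 2 / (1 - delta) ^+ 2 < 1.

(* Main.v *)
Require Import Defs.
From HB Require Import structures.
From mathcomp Require Import all_boot all_order all_algebra.
From mathcomp Require Import reals.
From mathcomp.real_closed Require Import complex.
From mathcomp Require Import ring lra.
From Stdlib Require Import ClassicalEpsilon.
Import Order.TTheory GRing.Theory Num.Theory.
Local Open Scope ring_scope.
Set Implicit Arguments.

Section Cplx.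
Variable R : realType.
Implicit Types x y : complex R.
Lemma ReM x y : complex.Re (x * y) = complex.Re x * complex.Re y - complex.Im x * complex.Im y.
Proof. by case: x => a b; case: y => c d. Qed.
Lemma ImM x y : complex.Im (x * y) = complex.Re x * complex.Im y + complex.Im x * complex.Re y.
Proof. by case: x => a b; case: y => c d. Qed.
Lemma ReD x y : complex.Re (x + y) = complex.Re x + complex.Re y.
Proof. by case: x => a b; case: y => c d. Qed.
Lemma ImD x y : complex.Im (x + y) = complex.Im x + complex.Im y.
Proof. by case: x => a b; case: y => c d. Qed.
Lemma ReN x : complex.Re (- x) = - complex.Re x.
Proof. by case: x. Qed.
Lemma ImN x : complex.Im (- x) = - complex.Im x.
Proof. by case: x. Qed.
Lemma ReJ x : complex.Re (conjc x) = complex.Re x.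
Proof. by case: x. Qed.
Lemma ImJ x : complex.Im (conjc x) = - complex.Im x.
Proof. by case: x. Qed.
Lemma Re0 : complex.Re (0 : complex R) = 0. Proof. by []. Qed.
Lemma Im0 : complex.Im (0 : complex R) = 0. Proof. by []. Qed.
Lemma Re1 : complex.Re (1 : complex R) = 1. Proof. by []. Qed.
Lemma Im1 : complex.Im (1 : complex R) = 0. Proof. by []. Qed.
Lemma RecR (r : R) : complex.Re (cR r) = r. Proof. by []. Qed.
Lemma ImcR (r : R) : complex.Im (cR r) = 0. Proof. by []. Qed.
Lemma Re2 : complex.Re (2%:R : complex R) = 2. Proof. by []. Qed.
Lemma Im2 : complex.Im (2%:R : complex R) = 0. Proof. by rewrite /= addr0. Qed.
Lemma cabsE x : cabs x = Normc.normc x. Proof. by case: x. Qed.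
Lemma half_parts x : complex.Re (x / 2%:R) = complex.Re x / 2 /\ complex.Im (x / 2%:R) = complex.Im x / 2.
Proof.
have h2 : (2%:R : complex R) != 0.
  by apply/negP => /eqP/(congr1 (@complex.Re R)); rewrite Re2 Re0 => /eqP; rewrite pnatr_eq0.
have e : x = (x / 2%:R) + (x / 2%:R) by field.
move: e; set y := x / 2%:R => e.
rewrite [in complex.Re x]e [in complex.Im x]e ReD ImD.
split; lra.
Qed.
End Cplx.
Section IP.
Variable R : realType.
Variable V : lmodType (complex R).
Variable ip : V -> V -> complex R.
Hypothesis Hip : is_inner_product ip.
Local Notation N x := (complex.Re (ip x x)).
Local Notation hn := (hnorm ip).

Lemma ipDl x y z : ip (x + y) z = ip x z + ip y z.
Proof. by case: Hip => H _ _ _; have := H 1 x y z; rewrite scale1r mul1r. Qed.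
Lemma ip0l z : ip 0 z = 0.
Proof.
have h := ipDl 0 0 z; rewrite addr0 in h.
by apply: (addrI (ip 0 z)); rewrite addr0 -h.
Qed.
Lemma ipZl a x z : ip (a *: x) z = a * ip x z.
Proof. by case: Hip => H _ _ _; have := H a x 0 z; rewrite !addr0 ip0l addr0. Qed.
Lemma ipNl x z : ip (- x) z = - ip x z.
Proof. by rewrite -scaleN1r ipZl mulN1r. Qed.
Lemma ipBl x y z : ip (x - y) z = ip x z - ip y z.
Proof. by rewrite ipDl ipNl. Qed.
Lemma ipC x y : ip y x = conjc (ip x y).
Proof. by case: Hip => _ H _ _; apply: H. Qed.
Lemma ipDr x y z : ip x (y + z) = ip x y + ip x z.
Proof. by rewrite ipC ipDl rmorphD /= -!ipC. Qed.
Lemma ipZr a x y : ip x (a *: y) = conjc a * ip x y.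
Proof. by rewrite ipC ipZl rmorphM /= -ipC. Qed.
Lemma ip0r z : ip z 0 = 0.
Proof. by rewrite -(scale0r 0) ipZr rmorph0 mul0r. Qed.
Lemma ipNr x z : ip x (- z) = - ip x z.
Proof. by rewrite -scaleN1r ipZr rmorphN rmorph1 mulN1r. Qed.
Lemma ipBr x y z : ip x (y - z) = ip x y - ip x z.
Proof. by rewrite ipDr ipNr. Qed.
Lemma Im_ipxx x : complex.Im (ip x x) = 0.
Proof. by case: Hip => _ _ H _; case: (H x). Qed.
Lemma N_ge0 x : 0 <= N x.
Proof. by case: Hip => _ _ H _; case: (H x). Qed.
Lemma N_eq0 x : N x = 0 -> x = 0.
Proof.
case: Hip => _ _ _ H e; apply: H.
have := Im_ipxx x; move: e; case: (ip x x) => a b /= -> -> //.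
Qed.
Lemma ND x y : N (x + y) = N x + N y + 2 * complex.Re (ip x y).
Proof.
rewrite ipDl !ipDr !ReD [ip y x]ipC ReJ; lra.
Qed.
Lemma NZ a x : N (a *: x) = (complex.Re a ^+ 2 + complex.Im a ^+ 2) * N x.
Proof.
rewrite ipZl ipZr !ReM !ImM ReJ ImJ Im_ipxx; ring.
Qed.
Lemma NN x : N (- x) = N x.
Proof. by rewrite ipNl ipNr opprK. Qed.
Lemma ReipN x y : complex.Re (ip x (- y)) = - complex.Re (ip x y).
Proof. by rewrite ipNr ReN. Qed.
Lemma Re_ip_le x y : 2 * complex.Re (ip x y) <= N x + N y.
Proof.
have := N_ge0 (x - y); rewrite ND NN ReipN; lra.
Qed.
Lemma hnE x : hn x = Num.sqrt (N x). Proof. by []. Qed.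
Lemma hn_ge0 x : 0 <= hn x. Proof. exact: sqrtr_ge0. Qed.
Lemma hn_sq x : hn x ^+ 2 = N x. Proof. by rewrite hnE sqr_sqrtr // N_ge0. Qed.
Lemma hn_le x b : 0 <= b -> N x <= b ^+ 2 -> hn x <= b.
Proof.
move=> b0 h; rewrite hnE -(ger0_norm b0) -sqrtr_sqr.
by rewrite ler_sqrt // sqr_ge0.
Qed.
Lemma hn_eq0 x : hn x = 0 -> x = 0.
Proof.
move=> h; apply: N_eq0; rewrite -hn_sq h; by rewrite expr0n.
Qed.
Lemma hn0 : hn 0 = 0.
Proof. by rewrite hnE ip0l Re0 sqrtr0. Qed.
Lemma Re_ip_CS x y : complex.Re (ip x y) <= hn x * hn y.
Proof.
have [hx0|hx0] := eqVneq (hn x) 0.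
  by rewrite (hn_eq0 _ hx0) ip0l Re0 hn0 mul0r.
have [hy0|hy0] := eqVneq (hn y) 0.
  by rewrite (hn_eq0 _ hy0) ip0r Re0 hn0 mulr0.
have hxp : 0 < hn x by rewrite lt_neqAle eq_sym hx0 hn_ge0.
have hyp : 0 < hn y by rewrite lt_neqAle eq_sym hy0 hn_ge0.
have := Re_ip_le (cR (hn y) *: x) (cR (hn x) *: y).
rewrite !NZ ipZl ipZr !ReM !ImM ReJ ImJ !RecR !ImcR -!hn_sq.
set r := complex.Re (ip x y); set s := complex.Im (ip x y).
set a := hn x; set b := hn y => h.
have hab : 0 < a * b by apply: mulr_gt0.
have : a * b * (r - a * b) <= 0 by nra.
rewrite pmulr_rle0 //; lra.
Qed.
Lemma hnD x y : hn (x + y) <= hn x + hn y.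
Proof.
apply: hn_le; first by apply: addr_ge0; apply: hn_ge0.
rewrite ND -!hn_sq; have := Re_ip_CS x y; nra.
Qed.
Lemma hnZ a x : hn (a *: x) = cabs a * hn x.
Proof.
by rewrite !hnE NZ sqrtrM // addr_ge0 // sqr_ge0.
Qed.
Lemma hnN x : hn (- x) = hn x.
Proof. by rewrite hnE NN. Qed.
Lemma hnB x y : hn (x - y) <= hn x + hn y.
Proof. by have := hnD x (- y); rewrite hnN. Qed.
Lemma hnBsym x y : hn (x - y) = hn (y - x).
Proof. by rewrite -hnN opprB. Qed.
End IP.
Arguments hn_ge0 [R V] ip x.
Arguments hn_le [R V] ip x b _ _.
Arguments hnE [R V] ip x.
Lemma ellipse_facts (R : realType) (delta : R) (lam : complex R) :
  0 < delta < 1 -> G_delta delta lam ->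
  [/\ (1 - delta) ^+ 2 * complex.Re (lam / 2%:R) ^+ 2 + (1 + delta) ^+ 2 * complex.Im (lam / 2%:R) ^+ 2 < ((1 - delta ^+ 2) / 2) ^+ 2,
      complex.Re (lam / 2%:R) ^+ 2 + complex.Im (lam / 2%:R) ^+ 2 <= (1 + delta ^+ 2) / 2 &
      complex.Re (lam / 2%:R) ^+ 2 + complex.Im (lam / 2%:R) ^+ 2 < 1].
Proof.
move=> /andP[d0 d1]; rewrite /G_delta => G.
have [hp hq] := @half_parts R lam.
move: hp hq.
set p := complex.Re (lam / 2%:R); set qq := complex.Im (lam / 2%:R) => hp hq.
set P := complex.Re lam ^+ 2 / (1 + delta) ^+ 2 in G.
set Q := complex.Im lam ^+ 2 / (1 - delta) ^+ 2 in G.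
have a0 : (1 + delta) ^+ 2 != 0 by rewrite expf_eq0 /=; apply/eqP; lra.
have b0 : (1 - delta) ^+ 2 != 0 by rewrite expf_eq0 /=; apply/eqP; lra.
have eP : complex.Re lam ^+ 2 = P * (1 + delta) ^+ 2 by rewrite /P divfK.
have eQ : complex.Im lam ^+ 2 = Q * (1 - delta) ^+ 2 by rewrite /Q divfK.
have P0 : 0 <= P by rewrite /P divr_ge0 // sqr_ge0.
have Q0 : 0 <= Q by rewrite /Q divr_ge0 // sqr_ge0.
have ep : p ^+ 2 = P * (1 + delta) ^+ 2 / 4.
  by rewrite hp expr_div_n eP; congr (_ / _); rewrite expr2 -natrM.
have eq : qq ^+ 2 = Q * (1 - delta) ^+ 2 / 4.
  by rewrite hq expr_div_n eQ; congr (_ / _); rewrite expr2 -natrM.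
rewrite ep eq; split.
- have h : (1 - delta ^+ 2) ^+ 2 = (1 - delta) ^+ 2 * (1 + delta) ^+ 2 by ring.
  rewrite expr_div_n h.
  have : 0 < (1 - delta) ^+ 2 * (1 + delta) ^+ 2 by apply: mulr_gt0; apply: exprn_gt0; lra.
  nra.
- have : (1 + delta) ^+ 2 <= 2 * (1 + delta ^+ 2) by nra.
  have : (1 - delta) ^+ 2 <= (1 + delta) ^+ 2 by nra.
  nra.
- have : (1 + delta) ^+ 2 < 4 by nra.
  have : (1 - delta) ^+ 2 < 4 by nra.
  nra.
Qed.
Lemma zmod1 (V : zmodType) (l x b c : V) : l - c - x = l - (x + b) + (b - c).
Proof. by rewrite addrAC opprD addrA addrA subrK. Qed.

Lemma geom_small (R : realType) (q e : R) : 0 <= q < 1 -> 0 < e -> exists N : nat, q ^+ N <= e.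
Proof.
case/andP=> q0 q1 e0.
have key : forall n : nat, q ^+ n * (1 + n%:R * (1 - q)) <= 1.
  elim=> [|n IH]; first by rewrite expr0 mul0r addr0 mul1r.
  have qn0 : 0 <= q ^+ n by apply: exprn_ge0.
  have qn1 : q ^+ n <= 1 by apply: exprn_ile1 => //; exact: ltW.
  rewrite exprS -natr1.
  have h1 : q * (q ^+ n * (1 + n%:R * (1 - q))) <= q by rewrite -[X in _ <= X]mulr1; apply: ler_wpM2l.
  have h2 : 0 <= (1 - q) * (1 - q * q ^+ n) by apply: mulr_ge0; nra.
  nra.
have pos : 0 <= (e * (1 - q))^-1 by rewrite invr_ge0; apply: mulr_ge0; lra.
have := archi_boundP pos; set N := Num.Def.archi_bound _ => hN.
exists N.
have h := key N.
have qn0 : 0 <= q ^+ N by apply: exprn_ge0.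
have eq0 : 0 < e * (1 - q) by apply: mulr_gt0; lra.
have : 1 < N%:R * (e * (1 - q)).
  by rewrite -(ltr_pdivrMr _ _ eq0) mul1r.
nra.
Qed.

Section Op.
Variable R : realType.
Variable V : lmodType (complex R).
Variable ip : V -> V -> complex R.
Hypothesis Hip : is_inner_product ip.
Local Notation N x := (complex.Re (ip x x)).
Local Notation hn := (hnorm ip).
Variable A : V -> V.
Hypothesis Alin : is_linear_op A.
Hypothesis Anorm : forall y, hn (A y) <= hn y.

Lemma A0 : A 0 = 0.
Proof.
have h := Alin 1 0 0; rewrite scaler0 addr0 scale1r in h.
by apply: (addrI (A 0)); rewrite addr0 -h.
Qed.
Lemma AD x y : A (x + y) = A x + A y.
Proof. by have := Alin 1 x y; rewrite !scale1r. Qed.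
Lemma AZ a x : A (a *: x) = a *: A x.
Proof. by have := Alin a x 0; rewrite !addr0 A0 addr0. Qed.
Lemma AN x : A (- x) = - A x.
Proof. by rewrite -scaleN1r AZ scaleN1r. Qed.
Lemma AB x y : A (x - y) = A x - A y.
Proof. by rewrite AD AN. Qed.

Lemma small_eq0 z : (forall e : R, 0 < e -> hn z < e) -> z = 0.
Proof.
move=> h; apply: (hn_eq0 Hip); apply/eqP; rewrite eq_le hn_ge0 andbT.
by rewrite leNgt; apply/negP => /h; rewrite ltxx.
Qed.

Variable w : complex R.
Hypothesis wlt : cabs w < 1.
Local Notation q := (cabs w).
Lemma q_ge0 : 0 <= q. Proof. exact: sqrtr_ge0. Qed.
Lemma omq_gt0 : 0 < 1 - q. Proof. by rewrite subr_gt0. Qed.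

Definition Dop x := x - w *: A x.

Lemma Dlin a x y : Dop (a *: x + y) = a *: Dop x + Dop y.
Proof. by rewrite /Dop Alin scalerDr scalerBr !scalerA [w * a]mulrC opprD addrACA. Qed.
Lemma DB x y : Dop (x - y) = Dop x - Dop y.
Proof. by rewrite /Dop AB scalerBr !opprB addrACA [RHS]addrACA [- y + - _]addrC. Qed.

Lemma key_bound y : (1 - q) * hn y <= hn (Dop y).
Proof.
have e : y = Dop y + w *: A y by rewrite /Dop subrK.
have h1 := hnD Hip (Dop y) (w *: A y).
rewrite -e (hnZ Hip) in h1.
have := Anorm y; have := q_ge0; have := hn_ge0 ip (A y); nra.
Qed.

Lemma D_inj y1 y2 : Dop y1 = Dop y2 -> y1 = y2.
Proof.
move=> e; apply/eqP; rewrite -subr_eq0; apply/eqP.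
apply: (hn_eq0 Hip); have := key_bound (y1 - y2); rewrite DB e subrr (hn0 Hip) //.
move=> h; apply/eqP; rewrite eq_le hn_ge0 andbT.
have := omq_gt0; nra.
Qed.

Hypothesis Hcomp : complete ip.

Lemma solve x : exists y, Dop y = x.
Proof.
pose f := fun y => x + w *: A y.
pose u := fun n : nat => iter n f 0.
have q0 := q_ge0; have q1 := omq_gt0.
have step : forall n, hn (u n.+1 - u n) <= q ^+ n * hn x.
  elim=> [|n IH]; first by rewrite /u /f /= A0 scaler0 addr0 subr0 expr0 mul1r.
  have -> : u n.+2 - u n.+1 = w *: A (u n.+1 - u n).
    by rewrite AB scalerBr /u /= /f opprD addrACA subrr add0r.
  rewrite (hnZ Hip) exprS -mulrA; apply: ler_wpM2l => //.
  by apply: le_trans (Anorm _) IH.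
have cauchy : forall n k, hn (u (n + k)%N - u n) * (1 - q) <= (q ^+ n - q ^+ (n + k)) * hn x.
  move=> n; elim=> [|k IH]; first by rewrite addn0 subrr (hn0 Hip) mul0r subrr mul0r.
  have e : u (n + k.+1)%N - u n = (u (n + k).+1 - u (n + k)%N) + (u (n + k)%N - u n).
    by rewrite addnS addrA subrK.
  have h := hnD Hip (u (n + k).+1 - u (n + k)%N) (u (n + k)%N - u n).
  rewrite -e in h.
  have s := step (n + k)%N.
  rewrite addnS exprS; rewrite addnS in h.
  have := hn_ge0 ip x.
  have : 0 <= q ^+ (n + k) by apply: exprn_ge0.
  nra.
have cb : forall n m, (n <= m)%N -> hn (u m - u n) * (1 - q) <= q ^+ n * hn x.
  move=> n m /subnKC <-; apply: (le_trans (cauchy n (m - n)%N)).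
  have := hn_ge0 ip x; have : 0 <= q ^+ (n + (m - n)) by apply: exprn_ge0.
  nra.
have [l hl] : exists l : V, forall e : R, 0 < e -> exists N : nat, forall n : nat,
        (N <= n)%N -> hn (u n - l) < e.
  apply: Hcomp => e e0.
  have hx1 : 0 < hn x + 1 by have := hn_ge0 ip x; lra.
  have e1 : 0 < e * (1 - q) / (2 * (hn x + 1)).
    apply: divr_gt0; last by lra.
    by apply: mulr_gt0.
  have qlt : 0 <= q < 1 by rewrite q0 wlt.
  have [N hN] := @geom_small _ q _ qlt e1.
  exists N => m n hm hn'.
  have gen : forall a b, (N <= a)%N -> (a <= b)%N -> hn (u b - u a) < e.
    move=> a b ha hab; have h := cb a b hab.
    have qaN : q ^+ a <= q ^+ N by apply: ler_wiXn2l => //; lra.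
    have hx0 := hn_ge0 ip x; have hab0 := hn_ge0 ip (u b - u a).
    have hx2 : 0 < 2 * (hn x + 1) by lra.
    move: hN; rewrite ler_pdivlMr // => hN.
    have qN0 : 0 <= q ^+ N by apply: exprn_ge0.
    have hqa : q ^+ a * hn x <= q ^+ N * hn x by apply: ler_wpM2r.
    have : hn (u b - u a) * (1 - q) < e * (1 - q) by nra.
    by rewrite ltr_pM2r.
  case: (leqP m n) => hmn.
    by rewrite (hnBsym Hip); apply: gen.
  by apply: gen => //; apply: ltnW.
exists l; apply/eqP; rewrite -subr_eq0; apply/eqP; apply: small_eq0 => e e0.
have e2 : 0 < e / 2 by lra.
have [N hN] := hl (e / 2) e2.
have e1 : Dop l - x = (l - u N.+1) + w *: A (u N - l).
  by rewrite /Dop /u /= /f AB scalerBr; apply: zmod1.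
rewrite e1; apply: (le_lt_trans (hnD Hip _ _)); rewrite (hnZ Hip).
have h1 := hN N.+1 (leqnSn N); have h2 := hN N (leqnn N).
rewrite (hnBsym Hip) in h1.
have := Anorm (u N - l); have := hn_ge0 ip (A (u N - l)).
have : q <= 1 by lra.
nra.
Qed.
Lemma numer_bound (delta : R) (lam : complex R) : 0 < delta < 1 -> G_delta delta lam ->
  exists c : R, c < 1 /\ forall y,
    hn (cR delta *: A y - (lam / 2%:R) *: y) <= c * hn (y - (lam / 2%:R) *: A y).
Proof.
move=> dd G; have [hK hr hr1] := ellipse_facts dd G.
case/andP: dd => d0 d1.
move: hK hr hr1; set w0 := lam / 2%:R => hK hr hr1; clearbody w0.
set K := Num.sqrt ((1 - delta) ^+ 2 * complex.Re w0 ^+ 2 + (1 + delta) ^+ 2 * complex.Im w0 ^+ 2).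
have K0 : 0 <= K by apply: sqrtr_ge0.
have K2 : K ^+ 2 = (1 - delta) ^+ 2 * complex.Re w0 ^+ 2 + (1 + delta) ^+ 2 * complex.Im w0 ^+ 2.
  by rewrite sqr_sqrtr // addr_ge0 // mulr_ge0 // sqr_ge0.
set m := (1 - delta ^+ 2) / 2.
have m0 : 0 < m by rewrite /m; nra.
have Km : K < m.
  rewrite -(ltr_pXn2r (_ : (0 < 2)%N)) ?nnegrE ?K2 //; last exact: ltW.
set eta := m - K.
have eta0 : 0 < eta by rewrite /eta; lra.
have eta1 : eta <= 1 by rewrite /eta /m; nra.
have cw : cabs w0 ^+ 2 = complex.Re w0 ^+ 2 + complex.Im w0 ^+ 2.
  by rewrite /cabs sqr_sqrtr // addr_ge0 // sqr_ge0.
have cw0 : 0 <= cabs w0 by apply: sqrtr_ge0.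
have cw1 : cabs w0 <= 1 by nra.
have key : forall y, N (cR delta *: A y - w0 *: y) <= (1 - eta / 4) * N (y - w0 *: A y).
  move=> y; set a := A y.
  have hA : N a <= N y.
    rewrite -!(hn_sq Hip); have := Anorm y; have := hn_ge0 ip a; rewrite -/a; nra.
  have hup : N (y - w0 *: a) <= 4 * N y.
    have h1 := hnB Hip y (w0 *: a); rewrite (hnZ Hip) in h1.
    have h2 := Anorm y; rewrite -/a in h2.
    rewrite -!(hn_sq Hip).
    have := hn_ge0 ip a; have := hn_ge0 ip y; have := hn_ge0 ip (y - w0 *: a).
    move=> g1 g2 g3.
    have h3 : cabs w0 * hn a <= hn y by nra.
    have h4 : hn (y - w0 *: a) <= 2 * hn y by lra.
    nra.
  set zr := complex.Re (ip a y); set zi := complex.Im (ip a y).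
  set p := complex.Re w0; set qq := complex.Im w0.
  have E1 : N (y - w0 *: a) = N y + (p ^+ 2 + qq ^+ 2) * N a - 2 * (p * zr - qq * zi).
    rewrite (ND Hip) (NN Hip) (NZ Hip) (ipNr Hip) (ipZr Hip) ReN ReM ReJ ImJ.
    rewrite [ip y a](ipC Hip) ReJ ImJ -/zr -/zi -/p -/qq; ring.
  have E2 : N (cR delta *: a - w0 *: y) = delta ^+ 2 * N a + (p ^+ 2 + qq ^+ 2) * N y
                 - 2 * delta * (p * zr + qq * zi).
    rewrite (ND Hip) (NN Hip) !(NZ Hip) (ipNr Hip) (ipZl Hip) (ipZr Hip) ReN !ReM !ImM ReJ ImJ.
    rewrite RecR ImcR -/zr -/zi -/p -/qq; ring.
  set zeta := Complex (- ((1 - delta) * p)) (- ((1 + delta) * qq)).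
  have E3 : N (zeta *: a + cR K *: y) =
            K * (K * (N a + N y) - (2 * (1 - delta) * p * zr - 2 * (1 + delta) * qq * zi)).
    rewrite (ND Hip) !(NZ Hip) (ipZl Hip) (ipZr Hip) !ReM !ImM ReJ ImJ RecR ImcR /=.
    rewrite -/zr -/zi.
    have -> : (- ((1 - delta) * p)) ^+ 2 + (- ((1 + delta) * qq)) ^+ 2 = K ^+ 2 by rewrite K2; ring.
    ring.
  have hX : 2 * (1 - delta) * p * zr - 2 * (1 + delta) * qq * zi <= K * (N a + N y).
    have h3 := N_ge0 Hip (zeta *: a + cR K *: y); rewrite E3 in h3.
    have [K00|Kp] := eqVneq K 0.
      have hp : p = 0.
        apply/eqP; rewrite -sqrf_eq0 eq_le sqr_ge0 andbT.
        have : (1 - delta) ^+ 2 * p ^+ 2 <= 0 by move: K2; rewrite K00 expr0n /=; nra.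
        have : 0 < (1 - delta) ^+ 2 by apply: exprn_gt0; lra.
        nra.
      have hq : qq = 0.
        apply/eqP; rewrite -sqrf_eq0 eq_le sqr_ge0 andbT.
        have : (1 + delta) ^+ 2 * qq ^+ 2 <= 0 by move: K2; rewrite K00 expr0n /=; nra.
        have : 0 < (1 + delta) ^+ 2 by apply: exprn_gt0; lra.
        nra.
      by rewrite hp hq K00; lra.
    have Kpos : 0 < K by rewrite lt_neqAle eq_sym Kp K0.
    move: h3; rewrite pmulr_rge0 //; lra.
  have Na0 := N_ge0 Hip a; have Ny0 := N_ge0 Hip y.
  have mu0 : 0 <= (1 + delta ^+ 2) / 2 - (p ^+ 2 + qq ^+ 2) by lra.
  have P1 : 0 <= ((1 + delta ^+ 2) / 2 - (p ^+ 2 + qq ^+ 2)) * (N y - N a) by apply: mulr_ge0; lra.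
  have P2 : 0 <= eta * N a by apply: mulr_ge0; lra.
  have D : eta * N y <= N (y - w0 *: a) - N (cR delta *: a - w0 *: y).
    rewrite E1 E2; move: P1 P2 hX; rewrite /eta /m; nra.
  have : eta / 4 * N (y - w0 *: a) <= eta * N y by nra.
  lra.
exists (Num.sqrt (1 - eta / 4)); split.
  have s0 : 0 <= 1 - eta / 4 by lra.
  have := sqr_sqrtr s0; have := sqrtr_ge0 (1 - eta / 4); nra.
move=> y; rewrite !(hnE ip) -sqrtrM; last by lra.
by rewrite ler_sqrt ?key // mulr_ge0 //; [lra | apply: N_ge0].
Qed.

Lemma inv_bound S : op_inverse ip Dop S -> forall x, (1 - q) * hn (S x) <= hn x.
Proof. by case=> _ _ HS x; have := key_bound (S x); rewrite HS. Qed.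

Lemma exists_inv : exists S, op_inverse ip Dop S.
Proof.
pose S := fun x => proj1_sig (constructive_indefinite_description _ (solve x)).
have HS : forall x, Dop (S x) = x := fun x => proj2_sig (constructive_indefinite_description _ (solve x)).
exists S; split.
- split.
    by move=> a x y; apply: D_inj; rewrite Dlin !HS.
  exists (1 - q)^-1 => x.
  have := key_bound (S x); rewrite HS => h.
  have := omq_gt0 => h0.
  have ne : 1 - q != 0 by rewrite gt_eqF.
  have e : hn (S x) = (1 - q)^-1 * ((1 - q) * hn (S x)) by rewrite mulrA mulVf ?mul1r.
  rewrite [X in X <= _]e; apply: ler_wpM2l => //.
  by rewrite invr_ge0 ltW.
- by move=> x; apply: D_inj; rewrite HS.
- exact: HS.
Qed.
End Op.

Section Adj.
Variable R : realType.
Variable V : lmodType (complex R).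
Variable ip : V -> V -> complex R.
Hypothesis Hip : is_inner_product ip.
Local Notation N x := (complex.Re (ip x x)).
Local Notation hn := (hnorm ip).

Lemma adj_lin T Ts : is_adjoint ip T Ts -> is_linear_op Ts.
Proof.
move=> Hadj a x y.
set d := Ts (a *: x + y) - (a *: Ts x + Ts y).
have h : forall u, ip u d = 0.
  move=> u; rewrite /d (ipBr Hip) (ipDr Hip) (ipZr Hip) -!Hadj.
  by rewrite (ipDr Hip) (ipZr Hip) subrr.
apply/eqP; rewrite -subr_eq0; apply/eqP; apply: (N_eq0 Hip).
by rewrite -/d h.
Qed.

Lemma adj_norm T Ts : contraction ip T -> is_adjoint ip T Ts -> forall y, hn (Ts y) <= hn y.
Proof.
move=> [_ HT] Hadj y; set b := Ts y.
have e : ip b b = ip (T b) y by rewrite Hadj.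
have h1 := Re_ip_le Hip (T b) y; rewrite -e in h1.
have h2 : N (T b) <= N b.
  rewrite -!(hn_sq Hip); have := HT b; rewrite mul1r => h.
  have := hn_ge0 ip (T b); nra.
apply: hn_le; first exact: hn_ge0.
rewrite (hn_sq Hip); lra.
Qed.
End Adj.

Lemma G_cabs (R : realType) (delta : R) lam : 0 < delta < 1 -> G_delta delta lam -> cabs (lam / 2%:R) < 1.
Proof.
move=> dd G; have [_ _ h] := ellipse_facts dd G.
have cw : cabs (lam / 2%:R) ^+ 2 = complex.Re (lam / 2%:R) ^+ 2 + complex.Im (lam / 2%:R) ^+ 2.
  by rewrite /cabs sqr_sqrtr // addr_ge0 // sqr_ge0.
have := sqrtr_ge0 (complex.Re (lam / 2%:R) ^+ 2 + complex.Im (lam / 2%:R) ^+ 2).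
rewrite -/(cabs _); nra.
Qed.

Lemma part1 (R : realType) (delta : R) (V : lmodType (complex R))
    (ip : V -> V -> complex R) :
  is_hilbert ip -> 0 < delta < 1 ->
  (forall (T Ts : V -> V), contraction ip T -> is_adjoint ip T Ts ->
     forall lam : complex R, G_delta delta lam ->
       exists S : V -> V, op_inverse ip (denom_op Ts lam) S /\
         op_norm_lt1 ip (fun x => numer_op delta Ts lam (S x))).
Proof.
move=> [Hip Hcomp] dd T Ts HT Hadj lam G.
have Alin := adj_lin Hip Hadj.
have Anorm := adj_norm Hip HT Hadj.
have wlt := G_cabs dd G.
have [S HS] := exists_inv Hip Alin Anorm (lam / 2%:R) wlt Hcomp.
exists S; split; first exact: HS.
have [c [c1 hc]] := numer_bound Hip Ts Anorm dd G.
exists c; split => // x.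
have := hc (S x); case: HS => _ _ HS2.
by rewrite /numer_op; have := HS2 x; rewrite /Dop => ->.
Qed.

Section Refl.
Variable K : comNzRingType.
Variable M : lmodType K.
Definition e6 (n : nat) : 'rV[K]_6 := \row_(i < 6) (if (i : nat) == n then 1 else 0).
Definition phi (atm : nat -> M) (c : 'rV[K]_6) : M := \sum_(i < 6) c 0 i *: atm i.
Lemma phiD atm a b : phi atm (a + b) = phi atm a + phi atm b.
Proof. by rewrite /phi -big_split; apply: eq_bigr => i _; rewrite mxE scalerDl. Qed.
Lemma phiN atm a : phi atm (- a) = - phi atm a.
Proof. by rewrite /phi -sumrN; apply: eq_bigr => i _; rewrite mxE scaleNr. Qed.
Lemma phiZ atm t a : phi atm (t *: a) = t *: phi atm a.
Proof. by rewrite /phi scaler_sumr; apply: eq_bigr => i _; rewrite mxE scalerA. Qed.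
Lemma phi_e atm n : (n < 6)%N -> phi atm (e6 n) = atm n.
Proof.
move=> hn; rewrite /phi (bigD1 (Ordinal hn)) //= big1 ?addr0.
  by rewrite mxE /= eqxx scale1r.
move=> i /negbTE hi; rewrite mxE.
have -> : ((i : nat) == n) = false.
  by apply/negbTE; apply: contraFN hi => /eqP e; apply/eqP; apply: val_inj.
by rewrite scale0r.
Qed.

Lemma big_id (d w h : K) (u k g2 Au Ak Ag2 : M) :
 (d *: (Au + h *: (Ak + h *: Ag2)) - (w + h) *: (u + h *: (k + h *: g2)))
   - (d *: Au - w *: u) - h *: (d *: Ak - u - w *: k)
 = (h * h) *: (d *: Ag2 - k - (w + h) *: g2).
Proof.
pose atm := fun n => nth 0 [:: u; k; g2; Au; Ak; Ag2] n.
have E : forall c c' : 'rV[K]_6, c = c' -> phi atm c = phi atm c' by move=> ? ? ->.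
have := E ((d *: (e6 3 + h *: (e6 4 + h *: e6 5)) - (w + h) *: (e6 0 + h *: (e6 1 + h *: e6 2)))
   - (d *: e6 3 - w *: e6 0) - h *: (d *: e6 4 - e6 0 - w *: e6 1))
   ((h * h) *: (d *: e6 5 - e6 1 - (w + h) *: e6 2)).
rewrite !(phiD, phiN, phiZ) !phi_e //; apply.
apply/rowP => i; rewrite !mxE; case: i => [[|[|[|[|[|[|//]]]]]] ?] /=; ring.
Qed.
End Refl.

Section Lin.
Variable R : realType.
Variable V : lmodType (complex R).
Lemma lin_comp (f g : V -> V) : is_linear_op f -> is_linear_op g -> is_linear_op (fun x => f (g x)).
Proof. by move=> hf hg a x y; rewrite hg hf. Qed.
Lemma lin_scale c (f : V -> V) : is_linear_op f -> is_linear_op (fun x => c *: f x).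
Proof. by move=> hf a x y; rewrite hf scalerDr !scalerA mulrC. Qed.
Lemma lin_sub (f g : V -> V) : is_linear_op f -> is_linear_op g -> is_linear_op (fun x => f x - g x).
Proof. by move=> hf hg a x y; rewrite hf hg scalerBr opprD addrACA. Qed.
End Lin.

Section Cabs.
Variable R : realType.
Implicit Types x y : complex R.
Lemma cabs_ge0 x : 0 <= cabs x. Proof. exact: sqrtr_ge0. Qed.
Lemma cabsM x y : cabs (x * y) = cabs x * cabs y.
Proof. by rewrite !cabsE Normc.normcM. Qed.
Lemma cabsD x y : cabs (x + y) <= cabs x + cabs y.
Proof. by rewrite !cabsE; exact: le_normcD. Qed.
Lemma cabs_cR (r : R) : 0 <= r -> cabs (cR r) = r.
Proof. by move=> r0; rewrite /cabs RecR ImcR expr0n addr0 sqrtr_sqr ger0_norm. Qed.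
Lemma cabs_inv2 : cabs ((2%:R : complex R)^-1) = 2^-1.
Proof.
rewrite cabsE Normc.normcV -cabsE; congr (_^-1).
by rewrite /cabs Re2 Im2 expr0n addr0 sqrtr_sqr ger0_norm.
Qed.
End Cabs.
Arguments cabs_ge0 {R} x.
Arguments cabsM {R} x y.
Arguments cabsD {R} x y.
Arguments cabs_cR {R} r _.
Arguments cabs_inv2 {R}.

Lemma holo (R : realType) (V : lmodType (complex R)) (ip : V -> V -> complex R)
  (Hip : is_inner_product ip) (A : V -> V) (Alin : is_linear_op A)
  (Anorm : forall y, hnorm ip (A y) <= hnorm ip y) (delta : R) (F : complex R -> V -> V) :
  0 < delta < 1 ->
  (forall lam, G_delta delta lam -> exists S, op_inverse ip (denom_op A lam) S /\
      forall x, F lam x = numer_op delta A lam (S x)) ->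
  holomorphic_on ip (G_delta delta) F.
Proof.
move=> dd HF lam Glam.
have [S [HSi HFl]] := HF lam Glam.
have wlt := G_cabs dd Glam.
have Sb := inv_bound Hip Anorm HSi.
case: (HSi) => [[Slin _] SD DS].
move: wlt Sb SD DS; set w := lam / 2%:R => wlt Sb SD DS.
have q0 := cabs_ge0 w.
have q1 : 0 < 1 - cabs w by rewrite subr_gt0.
set M0 := (1 - cabs w)^-1.
have M0p : 0 < M0 by rewrite invr_gt0.
have M01 : 1 <= M0 by rewrite -[1]invr1 lef_pV2 ?posrE; lra.
have SbM : forall y, hnorm ip (S y) <= M0 * hnorm ip y.
  move=> y; have := Sb y => h.
  have e : hnorm ip (S y) = M0 * ((1 - cabs w) * hnorm ip (S y)) by rewrite mulrA mulVf ?mul1r // gt_eqF.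
  by rewrite e; apply: ler_wpM2l => //; exact: ltW.
have hk : forall x, hnorm ip (S (A (S x))) <= M0 * M0 * hnorm ip x.
  move=> x; apply: (le_trans (SbM _)); rewrite -mulrA; apply: ler_wpM2l; first exact: ltW.
  by apply: (le_trans (Anorm _)); apply: SbM.
pose D := fun x => ((2%:R : complex R)^-1) *: (cR delta *: A (S (A (S x))) - S x - w *: S (A (S x))).
case/andP: (dd) => d0 d1.
exists D; split.
  split.
    exact: (lin_scale _ (lin_sub (lin_sub (lin_scale _ (lin_comp Alin (lin_comp Slin (lin_comp Alin Slin)))) Slin) (lin_scale _ (lin_comp Slin (lin_comp Alin Slin))))).
  exists (cabs ((2%:R : complex R)^-1) * (delta * (M0 * M0) + M0 + cabs w * (M0 * M0))) => x.
  rewrite /D (hnZ Hip) -mulrA; apply: ler_wpM2l; first exact: cabs_ge0.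
  set k := S (A (S x)).
  have h1 := hnB Hip (cR delta *: A k - S x) (w *: k).
  have h2 := hnB Hip (cR delta *: A k) (S x).
  rewrite !(hnZ Hip) (cabs_cR delta (ltW d0)) in h1 h2.
  have h3 := hk x; rewrite -/k in h3.
  have h4 := Anorm k.
  have h5 := SbM x.
  have := hn_ge0 ip x; have := hn_ge0 ip k; have := hn_ge0 ip (A k).
  nra.
move=> e e0.
set B := 2 * M0.
have B1 : 1 <= B by rewrite /B; lra.
have B3 : 0 < B ^+ 3 by apply: exprn_gt0; lra.
exists (Num.min (1 - cabs w) (e / B ^+ 3)); split.
  by rewrite lt_min q1 divr_gt0.
move=> mu Gmu /andP[dpos]; rewrite lt_min => /andP[dl1 dl2].
have [S' [HS'i HFm]] := HF mu Gmu.
have vlt := G_cabs dd Gmu.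
have S'b := inv_bound Hip Anorm HS'i.
case: (HS'i) => [[S'lin _] S'D DS'].
move: vlt S'b S'D DS' HFm; set v := mu / 2%:R => vlt S'b S'D DS' HFm.
set h := v - w.
have evh : v = w + h by rewrite /h addrC subrK.
have eh : (mu - lam) * (2%:R)^-1 = h by rewrite mulrBl.
have ch : cabs (mu - lam) = 2 * cabs h.
  by rewrite -eh cabsM cabs_inv2; field.
have cv : cabs v <= cabs w + cabs h by rewrite evh; apply: cabsD.
have ch0 := cabs_ge0 h.
have S'B : forall y, hnorm ip (S' y) <= B * hnorm ip y.
  move=> y; have := S'b y => hy.
  have hB : 1 <= B * (1 - cabs v).
    have hh : 1 - cabs w <= 2 * (1 - cabs v) by lra.
    rewrite /B -mulrA mulrCA.
    have e1 : 1 = M0 * (1 - cabs w) by rewrite mulVf // gt_eqF.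
    rewrite [X in X <= _]e1; apply: ler_wpM2l; [exact: ltW | exact: hh].
  have := hn_ge0 ip (S' y); have := hn_ge0 ip y; have : 0 <= B by lra.
  nra.
have SB : forall y, hnorm ip (S y) <= B * hnorm ip y.
  move=> y; apply: (le_trans (SbM y)); apply: ler_wpM2r; [exact: hn_ge0 | rewrite /B; lra].
have I : forall y, S' y = S y + h *: S' (A (S y)).
  move=> y.
  have e1 : S y = S' (y - h *: A (S y)).
    rewrite -[S y in LHS]S'D; congr (S' _).
    rewrite /denom_op -/v evh scalerDl opprD addrA; congr (_ - _); exact: DS.
  by rewrite {1}e1 (AB S'lin) (AZ S'lin) subrK.
move=> x /=; rewrite HFm HFl /numer_op -/v -/w.
rewrite /D scalerA eh (I x) (I (A (S x))) !(AD Alin, AZ Alin) evh big_id.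
rewrite (hnZ Hip) cabsM -evh.
set k := S (A (S x)); set g2 := S' (A k).
have hv1 : cabs v <= 1 by lra.
have hx0 := hn_ge0 ip x.
have hkk : hnorm ip k <= B * B * hnorm ip x.
  apply: (le_trans (SB _)); rewrite -mulrA; apply: ler_wpM2l; first lra.
  by apply: (le_trans (Anorm _)); apply: SB.
have hg : hnorm ip g2 <= B * hnorm ip k.
  by apply: (le_trans (S'B _)); apply: ler_wpM2l; [lra | apply: Anorm].
have hk0 := hn_ge0 ip k; have hg0 := hn_ge0 ip g2.
have e3 : B ^+ 3 = B * (B * B) by rewrite !exprS expr0 mulr1.
have hk3 : hnorm ip k <= B ^+ 3 * hnorm ip x.
  apply: (le_trans hkk); apply: ler_wpM2r => //; rewrite e3; nra.
have hg3 : hnorm ip g2 <= B ^+ 3 * hnorm ip x.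
  rewrite e3; have : B * hnorm ip k <= B * (B * B * hnorm ip x) by apply: ler_wpM2l; lra.
  nra.
have hAg := Anorm g2.
have h1 := hnB Hip (cR delta *: A g2 - k) (v *: g2).
have h2 := hnB Hip (cR delta *: A g2) k.
rewrite !(hnZ Hip) (cabs_cR delta (ltW d0)) in h1 h2.
have hZ : hnorm ip (cR delta *: A g2 - k - v *: g2) <= 3 * B ^+ 3 * hnorm ip x.
  have := hn_ge0 ip (A g2); have := cabs_ge0 v.
  nra.
have hsmall : cabs h * B ^+ 3 * 2 < e.
  have eB : e / B ^+ 3 * B ^+ 3 = e by rewrite divfK // gt_eqF.
  move: dl2; rewrite ch => dl2; nra.
have hZ0 := hn_ge0 ip (cR delta *: A g2 - k - v *: g2).
rewrite ch.
have H1 : cabs h * hnorm ip (cR delta *: A g2 - k - v *: g2) <= cabs h * (3 * B ^+ 3 * hnorm ip x).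
  by apply: ler_wpM2l.
have H2 : cabs h * (3 * B ^+ 3) <= 2 * e by lra.
have s1 : cabs h * cabs h * hnorm ip (cR delta *: A g2 - k - v *: g2) <=
          cabs h * (cabs h * (3 * B ^+ 3 * hnorm ip x)).
  by rewrite -mulrA; apply: ler_wpM2l.
have s2 : cabs h * (cabs h * (3 * B ^+ 3 * hnorm ip x)) = (cabs h * (3 * B ^+ 3)) * (cabs h * hnorm ip x) by ring.
have s3 : (cabs h * (3 * B ^+ 3)) * (cabs h * hnorm ip x) <= (2 * e) * (cabs h * hnorm ip x).
  by apply: ler_wpM2r => //; apply: mulr_ge0.
have s4 : e * (2 * cabs h) * hnorm ip x = (2 * e) * (cabs h * hnorm ip x) by ring.
rewrite s4; apply: (le_trans s1); rewrite s2; exact: s3.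
Qed.

Unset Implicit Arguments.
Theorem lemma2p7 (R : realType) (delta : R) (V : lmodType (complex R))
    (ip : V -> V -> complex R) :
  is_hilbert ip -> 0 < delta < 1 ->
  (forall (T Ts : V -> V), contraction ip T -> is_adjoint ip T Ts ->
     forall lam : complex R, G_delta delta lam ->
       exists S : V -> V, op_inverse ip (denom_op Ts lam) S /\
         op_norm_lt1 ip (fun x => numer_op delta Ts lam (S x)))
  /\
  (forall (T Ts : V -> V), contraction ip T -> is_adjoint ip T Ts ->
     forall F : complex R -> V -> V,
       (forall lam : complex R, G_delta delta lam ->
          exists S : V -> V, op_inverse ip (denom_op Ts lam) S /\
            (forall x, F lam x = numer_op delta Ts lam (S x))) ->
       holomorphic_on ip (G_delta delta) F).
Proof.
move=> HH dd; split; first exact: part1.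
case: HH => Hip _ T Ts HT Hadj F HF.
exact: (holo Hip (adj_lin Hip Hadj) (adj_norm Hip HT Hadj) F dd HF).
Qed.
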